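(* For $n\ge 1$, let $S_n$ denote the bitsum (number of $1$s) of a persolus bitstring of length $n$ chosen uniformly at random among all persolus bitstrings of length $n$. Then \[ \lim_{n\to\infty}\frac{\mathbb{E}(S_n)}{n}=\frac{1}{3}\left[1-\left(\frac{31+3\sqrt{93}}{1922}\right)^{1/3}-\left(\frac{31-3\sqrt{93}}{1922}\right)^{1/3}\right]=0.1942540040\ldots, \] \[ \lim_{n\to\infty}\frac{\mathbb{V}(S_n)}{n}=\frac{1}{2883}\left(\frac{93}{2}\right)^{1/3}\left[\left(8649+457\sqrt{93}\right)^{1/3}+\left(8649-457\sqrt{93}\right)^{1/3}\right]=0.0495615175\ldots \]
   Context: A finite bitstring (a finite word over $\{0,1\}$) is called persolus if every $1$ in it is isolated (no two $1$s are adjacent) and each of its $0$s has at least one neighboring (adjacent) $0$. For every $n\ge1$ there is at least one persolus bitstring of length $n$. $\mathbb{E}$ and $\mathbb{V}$ denote expectation and variance with respect to the uniform distribution on persolus bitstrings of length $n$. *)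

(* Defs.v *)
From Stdlib Require Import Reals List Arith Bool.
Import ListNotations.
Open Scope R_scope.

Fixpoint all_bits (n : nat) : list (list bool) :=
  match n with
  | O => [[]]
  | S k => map (cons false) (all_bits k) ++ map (cons true) (all_bits k)
  end.

(* i-th bit (0-indexed); positions outside the string read as false,
   but every use below is guarded by explicit bounds where it matters. *)
Definition bit (s : list bool) (i : nat) : bool := nth i s false.

Definition ones_isolated (s : list bool) : bool :=
  forallb (fun i => negb (bit s i && bit s (S i))) (seq 0 (length s)).

Definition zeros_have_zero_neighbour (s : list bool) : bool :=
  forallb (fun i =>
     bit s i
     || (Nat.ltb 0 i && negb (bit s (i - 1)))
     || (Nat.ltb (S i) (length s) && negb (bit s (S i))))
    (seq 0 (length s)).

Definition persolus (s : list bool) : bool :=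
  ones_isolated s && zeros_have_zero_neighbour s.

Definition persolus_strings (n : nat) : list (list bool) :=
  filter persolus (all_bits n).

Definition bitsum (s : list bool) : nat := length (filter (fun b => b) s).

Definition sumR (l : list R) : R := fold_right Rplus 0 l.

Definition ES (n : nat) : R :=
  sumR (map (fun s => INR (bitsum s)) (persolus_strings n))
  / INR (length (persolus_strings n)).

Definition VS (n : nat) : R :=
  sumR (map (fun s => (INR (bitsum s) - ES n) ^ 2) (persolus_strings n))
  / INR (length (persolus_strings n)).

(* Main.v *)
Require Import Defs.
From Stdlib Require Import Reals Lra Lia Psatz ZArith List Arith Bool.
Import ListNotations.
Open Scope R_scope.

Lemma forallb_ext' {A} (f g : A -> bool) l : (forall x, f x = g x) -> forallb f l = forallb g l.
Proof. intros H; induction l; simpl; auto. rewrite H, IHl; auto. Qed.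

Lemma forallb_map' {A B} (f : B -> bool) (g : A -> B) l : forallb f (map g l) = forallb (fun x => f (g x)) l.
Proof. induction l; simpl; auto. rewrite IHl; auto. Qed.

Lemma seq0S n : seq 0 (S n) = 0%nat :: map S (seq 0 n).
Proof. simpl. rewrite seq_shift. auto. Qed.

Lemma O_cons b s : ones_isolated (b :: s) = negb (b && bit s 0) && ones_isolated s.
Proof.
  unfold ones_isolated. cbn [length]. rewrite seq0S. cbn [forallb].
  rewrite forallb_map'. reflexivity.
Qed.

Definition Zg (pz : bool) (s : list bool) : bool :=
  forallb (fun i => bit s i || (match i with O => pz | S j => negb (bit s j) end)
     || (Nat.ltb (S i) (length s) && negb (bit s (S i)))) (seq 0 (length s)).

Lemma Z_Zg s : zeros_have_zero_neighbour s = Zg false s.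
Proof.
  unfold zeros_have_zero_neighbour, Zg. apply forallb_ext'. intros [|i]; simpl; auto.
  rewrite Nat.sub_0_r. auto.
Qed.

Lemma Zg_cons pz b s : Zg pz (b :: s) =
  (b || pz || (Nat.ltb 1 (S (length s)) && negb (bit s 0))) && Zg (negb b) s.
Proof.
  unfold Zg. cbn [length]. rewrite seq0S. cbn [forallb].
  rewrite forallb_map'. f_equal. apply forallb_ext'. intros [|i]; reflexivity.
Qed.

Lemma pers_eq s : persolus s = ones_isolated s && Zg false s.
Proof. unfold persolus. rewrite Z_Zg. auto. Qed.

Ltac psimp := rewrite ?pers_eq, ?O_cons, ?Zg_cons; cbn [bit nth negb andb orb length Nat.ltb Nat.leb];
   rewrite ?O_cons, ?Zg_cons; cbn [bit nth negb andb orb length Nat.ltb Nat.leb].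

Lemma L1 u : persolus (false::false::false::u) = persolus (false::false::u).
Proof. rewrite !pers_eq, !O_cons, !Zg_cons. simpl. rewrite ?Zg_cons. simpl. try reflexivity. Qed.
Lemma L2 u : persolus (false::false::true::u) = persolus (true::u).
Proof. rewrite !pers_eq, !O_cons, !Zg_cons. simpl. rewrite ?Zg_cons. simpl. try reflexivity. Qed.
Lemma L3 u : persolus (true::false::u) = persolus (false::u).
Proof. rewrite !pers_eq, !O_cons, !Zg_cons. simpl. reflexivity. Qed.
Lemma L4 u : persolus (true::true::u) = false.
Proof. rewrite !pers_eq, !O_cons. simpl. reflexivity. Qed.
Lemma L5 u : persolus (false::true::u) = false.
Proof. rewrite !pers_eq, !Zg_cons. simpl. rewrite andb_false_r. reflexivity. Qed.

Definition Sg (P : list bool -> bool) (g : list bool -> R) n :=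
  sumR (map g (filter P (all_bits n))).

Lemma sumR_app l1 l2 : sumR (l1 ++ l2) = sumR l1 + sumR l2.
Proof. induction l1; simpl; [lra|]. rewrite IHl1; lra. Qed.

Lemma filter_map' {A B} (P : B -> bool) (f : A -> B) l :
  filter P (map f l) = map f (filter (fun x => P (f x)) l).
Proof. induction l; simpl; auto. destruct (P (f a)); simpl; rewrite IHl; auto. Qed.

Lemma Sg_S P g n : Sg P g (S n) =
  Sg (fun s => P (false::s)) (fun s => g (false::s)) n +
  Sg (fun s => P (true::s)) (fun s => g (true::s)) n.
Proof.
  unfold Sg. cbn [all_bits]. rewrite filter_app, map_app, sumR_app, !filter_map', !map_map.
  reflexivity.
Qed.

Lemma Sg_ext P P' g g' n : (forall s, P s = P' s) -> (forall s, g s = g' s) ->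
  Sg P g n = Sg P' g' n.
Proof.
  intros HP Hg. unfold Sg. rewrite (filter_ext _ _ HP). rewrite (map_ext _ _ Hg). auto.
Qed.

Lemma Sg_false P g n : (forall s, P s = false) -> Sg P g n = 0.
Proof.
  intros HP. unfold Sg. induction (all_bits n); simpl; auto. rewrite HP. auto.
Qed.

Lemma Sg_plus P f g n : Sg P (fun s => f s + g s) n = Sg P f n + Sg P g n.
Proof. unfold Sg. induction (filter P (all_bits n)); simpl; [lra|]. rewrite IHl; lra. Qed.

Lemma Sg_scal P c f n : Sg P (fun s => c * f s) n = c * Sg P f n.
Proof. unfold Sg. induction (filter P (all_bits n)); simpl; [lra|]. rewrite IHl; lra. Qed.

Definition PF s := persolus (false::false::s).

Lemma SgF_rec g n : Sg PF g (n+3) =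
  Sg PF (fun s => g (false::s)) (n+2) + Sg PF (fun s => g (true::false::false::s)) n.
Proof.
  replace (n+3)%nat with (S (n+2)) by lia. rewrite Sg_S. f_equal.
  - apply Sg_ext; auto. intros s. unfold PF. apply L1.
  - replace (n+2)%nat with (S (S n)) by lia. rewrite Sg_S.
    rewrite (Sg_false (fun s => PF (true :: true :: s))) by (intros; unfold PF; rewrite L2; apply L4).
    rewrite Rplus_0_r. rewrite Sg_S.
    rewrite (Sg_false (fun s => PF (true :: false :: true :: s))) by (intros; unfold PF; rewrite L2, L3; apply L5).
    rewrite Rplus_0_r. apply Sg_ext; auto. intros s. unfold PF. rewrite L2, L3. auto.
Qed.

Lemma SgP_rec g n : Sg persolus g (n+3) =
  Sg PF (fun s => g (false::false::s)) (n+1) + Sg PF (fun s => g (true::false::false::s)) n.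
Proof.
  replace (n+3)%nat with (S (S (n+1))) by lia. rewrite Sg_S. rewrite Sg_S.
  rewrite (Sg_false (fun s => persolus (false :: true :: s))) by (intros; apply L5).
  rewrite Rplus_0_r. f_equal.
  rewrite Sg_S.
  rewrite (Sg_false (fun s => persolus (true :: true :: s))) by (intros; apply L4).
  rewrite Rplus_0_r. replace (n+1)%nat with (S n) by lia. rewrite Sg_S.
  rewrite (Sg_false (fun s => persolus (true :: false :: true :: s))) by (intros; rewrite L3; apply L5).
  rewrite Rplus_0_r. apply Sg_ext; auto. intros s. unfold PF. rewrite L3. auto.
Qed.

Definition mom (k : nat) (s : list bool) := INR (bitsum s) ^ k.
Definition Fk k n := Sg PF (mom k) n.

Lemma bitsum_f s : bitsum (false::s) = bitsum s. Proof. reflexivity. Qed.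
Lemma bitsum_t s : bitsum (true::s) = S (bitsum s). Proof. reflexivity. Qed.

Lemma F0_rec n : Fk 0 (n+3) = Fk 0 (n+2) + Fk 0 n.
Proof. unfold Fk. rewrite SgF_rec. f_equal; apply Sg_ext; auto. Qed.

Lemma F1_rec n : Fk 1 (n+3) = Fk 1 (n+2) + Fk 1 n + Fk 0 n.
Proof.
  unfold Fk. rewrite SgF_rec. rewrite Rplus_assoc. apply (f_equal2 Rplus); [apply Sg_ext; auto|idtac].
  rewrite <- Sg_plus. apply Sg_ext; auto. intros s. unfold mom. rewrite bitsum_t, !bitsum_f, S_INR. ring.
Qed.

Lemma F2_rec n : Fk 2 (n+3) = Fk 2 (n+2) + Fk 2 n + 2 * Fk 1 n + Fk 0 n.
Proof.
  unfold Fk. rewrite SgF_rec. rewrite !Rplus_assoc. apply (f_equal2 Rplus); [apply Sg_ext; auto|idtac].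
  rewrite <- Sg_scal, <- !Sg_plus. apply Sg_ext; auto. intros s. unfold mom. rewrite bitsum_t, !bitsum_f, S_INR. ring.
Qed.

Lemma F_init : Fk 0 0 = 1 /\ Fk 0 1 = 2 /\ Fk 0 2 = 2 /\ Fk 1 0 = 0 /\ Fk 1 1 = 1 /\ Fk 1 2 = 1
  /\ Fk 2 0 = 0 /\ Fk 2 1 = 1 /\ Fk 2 2 = 1.
Proof.
  unfold Fk, Sg, PF, mom. vm_compute filter. simpl. repeat split; lra.
Qed.

Lemma len_Sg n : INR (length (persolus_strings n)) = Sg persolus (mom 0) n.
Proof.
  unfold persolus_strings, Sg, mom. induction (filter persolus (all_bits n)); cbn [map sumR fold_right length]; auto. rewrite S_INR.
  rewrite IHl. unfold sumR. simpl. lra.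
Qed.

Lemma a_eq m : Sg persolus (mom 0) (m+3) = Fk 0 (m+1) + Fk 0 m.
Proof. rewrite SgP_rec. unfold Fk. f_equal; apply Sg_ext; auto. Qed.

Lemma b_eq m : Sg persolus (mom 1) (m+3) = Fk 1 (m+1) + Fk 1 m + Fk 0 m.
Proof.
  rewrite SgP_rec. unfold Fk. rewrite Rplus_assoc. apply (f_equal2 Rplus); [apply Sg_ext; auto|idtac].
  rewrite <- Sg_plus. apply Sg_ext; auto. intros s. unfold mom. rewrite bitsum_t, !bitsum_f, S_INR. ring.
Qed.

Lemma c_eq m : Sg persolus (mom 2) (m+3) = Fk 2 (m+1) + Fk 2 m + 2 * Fk 1 m + Fk 0 m.
Proof.
  rewrite SgP_rec. unfold Fk. rewrite !Rplus_assoc. apply (f_equal2 Rplus); [apply Sg_ext; auto|idtac].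
  rewrite <- Sg_scal, <- !Sg_plus. apply Sg_ext; auto. intros s. unfold mom. rewrite bitsum_t, !bitsum_f, S_INR. ring.
Qed.

Lemma ES_eq n : ES n = Sg persolus (mom 1) n / Sg persolus (mom 0) n.
Proof.
  unfold ES. rewrite len_Sg. f_equal. unfold Sg, persolus_strings, mom.
  f_equal. apply map_ext. intros; ring.
Qed.

Lemma VS_eq n : Sg persolus (mom 0) n <> 0 ->
  VS n = Sg persolus (mom 2) n / Sg persolus (mom 0) n - ES n ^ 2.
Proof.
  intros H. unfold VS. rewrite len_Sg.
  assert (E : sumR (map (fun s => (INR (bitsum s) - ES n) ^ 2) (persolus_strings n)) =
     Sg persolus (mom 2) n + (-2 * ES n) * Sg persolus (mom 1) n + ES n ^ 2 * Sg persolus (mom 0) n).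
  { rewrite <- !Sg_scal, <- !Sg_plus. unfold Sg, persolus_strings. f_equal. apply map_ext. intros; unfold mom; ring. }
  rewrite E. rewrite ES_eq. field. auto.
Qed.

Lemma cv_ext u v l : (forall n, u n = v n) -> Un_cv u l -> Un_cv v l.
Proof. intros H C eps He. destruct (C eps He) as [N HN]. exists N. intros n Hn. rewrite <- H. auto. Qed.

Lemma cv_ext_ev u v l N : (forall n, (n >= N)%nat -> u n = v n) -> Un_cv u l -> Un_cv v l.
Proof. intros H C eps He. destruct (C eps He) as [M HM]. exists (max N M). intros n Hn.
  rewrite <- H by lia. apply HM. lia. Qed.

Lemma cv_lim u l l' : Un_cv u l -> l = l' -> Un_cv u l'.
Proof. intros; subst; auto. Qed.

Lemma cv_const c : Un_cv (fun _ => c) c.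
Proof. intros eps He. exists 0%nat. intros. unfold R_dist. rewrite Rminus_diag, Rabs_R0. auto. Qed.

Lemma cv_shift u l : Un_cv u l -> Un_cv (fun n => u (S n)) l.
Proof. intros C eps He. destruct (C eps He) as [N HN]. exists N. intros n Hn. apply HN. lia. Qed.

Lemma cv_unshift u l : Un_cv (fun n => u (S n)) l -> Un_cv u l.
Proof. intros C eps He. destruct (C eps He) as [N HN]. exists (S N). intros n Hn.
  destruct n as [|n]; [lia|]. apply HN. lia. Qed.

Lemma cv_invn : Un_cv (fun n => / INR n) 0.
Proof.
  intros eps He. destruct (archimed (/ eps)) as [H1 _].
  assert (0 < IZR (up (/ eps))) by (pose proof (Rinv_0_lt_compat _ He); lra).
  exists (Z.to_nat (up (/ eps))). intros n Hn. unfold R_dist. rewrite Rminus_0_r.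
  assert (Hn' : IZR (up (/eps)) <= INR n).
  { rewrite <- (Z2Nat.id (up (/eps))). rewrite <- INR_IZR_INZ. apply le_INR. lia.
    apply le_IZR. lra. }
  assert (0 < INR n) by lra.
  rewrite Rabs_right by (left; apply Rinv_0_lt_compat; auto).
  rewrite <- (Rinv_inv eps). apply Rinv_lt_contravar.
  apply Rmult_lt_0_compat; auto. apply Rinv_0_lt_compat; auto. lra.
Qed.



Lemma contraction (Q g : nat -> R) k :
  0 <= k < 1 -> (forall n, 0 <= Q n) -> (forall n, Q (S n) <= k * Q n + g n) ->
  Un_cv g 0 -> Un_cv Q 0.
Proof.
  intros Hk HQ Hs Hg eps He.
  destruct (Hg (eps * (1 - k) / 2)) as [N1 HN1]. { unfold Rdiv. apply Rmult_lt_0_compat; [apply Rmult_lt_0_compat|]; lra. }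
  assert (Hind : forall j, Q (N1 + j)%nat <= k ^ j * Q N1 + eps / 2).
  { induction j.
    - simpl. rewrite Nat.add_0_r. lra.
    - replace (N1 + S j)%nat with (S (N1 + j)) by lia.
      specialize (HN1 (N1 + j)%nat ltac:(lia)). unfold R_dist in HN1. rewrite Rminus_0_r in HN1.
      pose proof (Rle_abs (g (N1 + j)%nat)).
      eapply Rle_trans. apply Hs. simpl.
      assert (k * Q (N1 + j)%nat <= k * (k ^ j * Q N1 + eps / 2)) by (apply Rmult_le_compat_l; lra).
      lra. }
  destruct (pow_lt_1_zero k ltac:(rewrite Rabs_right; lra) (eps / 2 / (Q N1 + 1))) as [N2 HN2].
  { apply Rdiv_lt_0_compat. lra. specialize (HQ N1). lra. }
  exists (N1 + N2)%nat. intros n Hn. unfold R_dist. rewrite Rminus_0_r.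
  rewrite Rabs_right by (apply Rle_ge; auto).
  replace n with (N1 + (n - N1))%nat by lia.
  eapply Rle_lt_trans. apply Hind.
  specialize (HN2 (n - N1)%nat ltac:(lia)).
  rewrite Rabs_right in HN2 by (apply Rle_ge; apply pow_le; lra).
  assert (HQ1 := HQ N1).
  assert (k ^ (n - N1) * (Q N1 + 1) < eps / 2).
  { apply (Rmult_lt_reg_r (/ (Q N1 + 1))). apply Rinv_0_lt_compat; lra.
    rewrite Rmult_assoc, Rinv_r by lra. rewrite Rmult_1_r. auto. }
  assert (0 <= k ^ (n - N1)) by (apply pow_le; lra).
  nra.
Qed.

Lemma Rdiv_le_pos a b : 0 <= a -> 0 < b -> 0 <= a / b.
Proof. intros. unfold Rdiv. apply Rmult_le_pos; auto. left; apply Rinv_0_lt_compat; auto. Qed.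

Lemma R2_step h w0 w1 e : 0 < h < 1 ->
  let Q0 := w1^2 + h*w1*w0 + h*w0^2 in
  let w2 := e - h*w1 - h*w0 in
  w2^2 + h*w2*w1 + h*w1^2 <= (1+h)/2 * Q0 + (1 + 10*h/(1-h)) * e^2.
Proof.
  intros Hh Q0 w2. unfold Q0, w2.
  set (a := h*w1 + 2*h*w0).
  assert (Hq : a^2 <= 20*h*(w1^2 + h*w1*w0 + h*w0^2)).
  { unfold a. assert (0 <= (20 - h)*w1^2 + 16*h*w1*w0 + 16*h*w0^2).
    { assert (0 <= (20-h)*(w1 + 8*h/(20-h)*w0)^2) by (apply Rmult_le_pos; [lra| apply pow2_ge_0]).
      assert (0 <= h*(16 - 64*h/(20-h))*w0^2).
      { apply Rmult_le_pos; [|apply pow2_ge_0]. apply Rmult_le_pos; [lra|].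
        assert (64*h/(20-h) <= 16). { apply (Rmult_le_reg_r (20-h)); [lra|]. unfold Rdiv. rewrite Rmult_assoc, Rinv_l by lra. nra. } lra. }
      replace ((20 - h)*w1^2 + 16*h*w1*w0 + 16*h*w0^2) with
        ((20-h)*(w1 + 8*h/(20-h)*w0)^2 + h*(16 - 64*h/(20-h))*w0^2) by (field; lra). lra. }
    nra. }
  set (d := (1-h)/(20*h)).
  assert (Hd : 0 < d) by (unfold d; apply Rdiv_lt_0_compat; lra).
  assert (0 <= (d*a + e)^2/(2*d)) by (apply Rdiv_le_pos; [apply pow2_ge_0| lra]).
  replace ((e - h * w1 - h * w0) ^ 2 + h * (e - h * w1 - h * w0) * w1 + h * w1 ^ 2)
    with (h * (w1^2 + h*w1*w0 + h*w0^2) + e*e - e*a) by (unfold a; ring).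
  replace ((1 + 10*h/(1-h)) * e^2) with (e^2 + e^2/(2*d)) by (unfold d; field; lra).
  replace ((d*a+e)^2/(2*d)) with (d*a^2/2 + a*e + e^2/(2*d)) in H by (field; lra).
  assert (d * a^2/2 <= (1-h)/2 * (w1^2 + h*w1*w0 + h*w0^2)).
  { unfold d. replace ((1 - h) / (20 * h) * a ^ 2 / 2) with ((1-h)/(40*h) * a^2) by (field; lra).
    replace ((1-h)/2 * (w1^2 + h*w1*w0 + h*w0^2)) with ((1-h)/(40*h) * (20*h*(w1^2 + h*w1*w0 + h*w0^2))) by (field; lra).
    apply Rmult_le_compat_l; auto. apply Rdiv_le_pos; lra. }
  nra.
Qed.

Lemma Q_pos h w0 w1 : 0 < h < 1 -> h/4 * (w1^2 + w0^2) <= w1^2 + h*w1*w0 + h*w0^2.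
Proof.
  intros Hh. assert (0 <= (1 - h/4)*(w1 + h/(2*(1-h/4))*w0)^2) by (apply Rmult_le_pos; [lra|apply pow2_ge_0]).
  assert (0 <= (3*h/4 - h^2/(4*(1-h/4)))*w0^2).
  { apply Rmult_le_pos; [|apply pow2_ge_0].
    assert (h^2/(4*(1-h/4)) <= 3*h/4). { apply (Rmult_le_reg_r (4*(1-h/4))); [lra|]. unfold Rdiv. rewrite Rmult_assoc, Rinv_l by lra. nra. } lra. }
  replace (w1^2 + h*w1*w0 + h*w0^2 - h/4*(w1^2+w0^2)) with
    ((1 - h/4)*(w1 + h/(2*(1-h/4))*w0)^2 + (3*h/4 - h^2/(4*(1-h/4)))*w0^2) in * by (field; lra).
  assert (0 <= (1 - h/4)*(w1 + h/(2*(1-h/4))*w0)^2 + (3*h/4 - h^2/(4*(1-h/4)))*w0^2) by lra.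
  replace (w1^2 + h*w1*w0 + h*w0^2) with (h/4 * (w1^2 + w0^2) + ((1 - h/4)*(w1 + h/(2*(1-h/4))*w0)^2 + (3*h/4 - h^2/(4*(1-h/4)))*w0^2)) by (field; lra).
  lra.
Qed.

Lemma R2_0 h (w e : nat -> R) : 0 < h < 1 ->
  (forall n, w (S (S n)) + h * w (S n) + h * w n = e n) -> Un_cv e 0 -> Un_cv w 0.
Proof.
  intros Hh Hr He.
  set (Q := fun n => w (S n) ^ 2 + h * w (S n) * w n + h * w n ^ 2).
  assert (HQ : Un_cv Q 0).
  { apply (contraction Q (fun n => (1 + 10*h/(1-h)) * e n ^ 2) ((1+h)/2)).
    - lra.
    - intros n. unfold Q. pose proof (Q_pos h (w n) (w (S n)) Hh).
      assert (0 <= h/4 * (w (S n) ^2 + w n ^2)) by (apply Rmult_le_pos; [lra| pose proof (pow2_ge_0 (w (S n))); pose proof (pow2_ge_0 (w n)); lra]). lra.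
    - intros n. unfold Q. replace (w (S (S n))) with (e n - h * w (S n) - h * w n) by (rewrite <- Hr; ring).
      apply R2_step; auto.
    - apply cv_lim with ((1 + 10*h/(1-h)) * (0 * 0)); [|ring].
      apply CV_mult. apply cv_const. simpl. apply cv_ext with (fun n => e n * e n). intros; ring.
      apply CV_mult; auto. }
  intros eps Heps. destruct (HQ (h/4 * eps^2)) as [N HN].
  { apply Rmult_lt_0_compat; [lra| apply pow_lt; lra]. }
  exists N. intros n Hn. specialize (HN n Hn). unfold R_dist in *. rewrite Rminus_0_r in *.
  pose proof (Q_pos h (w n) (w (S n)) Hh). unfold Q in HN.
  rewrite Rabs_right in HN.
  2:{ apply Rle_ge. assert (0 <= h/4 * (w (S n) ^2 + w n ^2)) by (apply Rmult_le_pos; [lra| pose proof (pow2_ge_0 (w (S n))); pose proof (pow2_ge_0 (w n)); lra]). lra. }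
  assert (w n ^ 2 < eps ^2).
  { pose proof (pow2_ge_0 (w (S n))). apply (Rmult_lt_reg_l (h/4)); [lra|]. nra. }
  rewrite <- (Rabs_right eps) by lra. apply Rsqr_lt_abs_0. unfold Rsqr. simpl in H0. lra.
Qed.

Lemma R2 h (w e : nat -> R) E : 0 < h < 1 ->
  (forall n, w (S (S n)) + h * w (S n) + h * w n = e n) -> Un_cv e E -> Un_cv w (E / (1 + 2*h)).
Proof.
  intros Hh Hr He.
  assert (Un_cv (fun n => w n - E/(1+2*h)) 0).
  { apply (R2_0 h _ (fun n => e n - E)); auto.
    - intros n. rewrite <- Hr. field. lra.
    - apply cv_lim with (E - E); [|ring]. apply CV_minus; auto. apply cv_const. }
  apply cv_lim with (0 + E/(1+2*h)); [|ring].
  apply cv_ext with (fun n => (w n - E/(1+2*h)) + E/(1+2*h)). intros; ring.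
  apply CV_plus; auto. apply cv_const.
Qed.

Lemma cv_inv u l : Un_cv u l -> l <> 0 -> Un_cv (fun n => / u n) (/ l).
Proof.
  intros C H. apply (continuity_seq (fun x => / x) u l); auto.
  apply (continuity_pt_inv id l). apply derivable_continuous_pt. apply derivable_pt_id. auto.
Qed.

Lemma cv_div_const u l c : Un_cv u l -> Un_cv (fun n => u n / c) (l / c).
Proof. intros C. unfold Rdiv. apply CV_mult; auto. apply cv_const. Qed.

Lemma cv_opp' u l : Un_cv u l -> Un_cv (fun n => - u n) (- l).
Proof. intros C. apply CV_opp in C. unfold opp_seq in C. auto. Qed.

Lemma cv_pow u l k : Un_cv u l -> Un_cv (fun n => u n ^ k) (l ^ k).
Proof.
  intros C. induction k. simpl. apply cv_const. simpl. apply CV_mult; auto.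
Qed.

Ltac cvauto :=
  first
  [ eassumption
  | match goal with
    | |- Un_cv (fun n => @?a n + @?b n) _ => eapply (CV_plus a b); cvauto
    | |- Un_cv (fun n => @?a n - @?b n) _ => eapply (CV_minus a b); cvauto
    | |- Un_cv (fun n => @?a n * @?b n) _ => eapply (CV_mult a b); cvauto
    | |- Un_cv (fun n => @?a n / ?c) _ => eapply (cv_div_const a _ c); cvauto
    | |- Un_cv (fun n => - @?a n) _ => eapply (cv_opp' a); cvauto
    | |- Un_cv (fun n => @?a n ^ ?k) _ => eapply (cv_pow a _ k); cvauto
    | |- Un_cv (fun n => ?c) _ => apply cv_const
    end ].

Lemma cv_invn1 : Un_cv (fun n => / INR (S n)) 0.
Proof. apply (cv_shift (fun n => / INR n)). apply cv_invn. Qed.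

Lemma divn_lin f a b : Un_cv (fun n => f n - a * INR n) b -> Un_cv (fun n => f n / INR n) a.
Proof.
  intros C. pose proof cv_invn.
  apply cv_ext_ev with (fun n => (f n - a * INR n) * / INR n + a) 1%nat.
  { intros n Hn. assert (INR n <> 0) by (apply not_0_INR; lia). field. auto. }
  eapply cv_lim. cvauto. ring.
Qed.

Lemma divn_zero f b : Un_cv f b -> Un_cv (fun n => f n / INR n) 0.
Proof.
  intros C. apply divn_lin with b. eapply cv_ext. 2: exact C. intros; simpl; ring.
Qed.

Lemma divn_shift f l : Un_cv (fun n => f n / INR n) l -> Un_cv (fun n => f (S n) / INR n) l.
Proof.
  intros C. pose proof cv_invn. apply cv_shift in C. simpl in C.
  apply cv_ext_ev with (fun n => f (S n) / INR (S n) * (1 + / INR n)) 1%nat.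
  { intros n Hn. assert (INR n <> 0) by (apply not_0_INR; lia). rewrite S_INR in *. field.
    split; auto. pose proof (pos_INR n). lra. }
  eapply cv_lim. cvauto. ring.
Qed.

Section Main.
Variable h : R.
Hypothesis Hh : 0 < h < 1.
Variables X Y Z : nat -> R.
Hypothesis rX : forall n, X (S (S (S n))) = (1-h) * X (S (S n)) + h * X n.
Hypothesis rY : forall n, Y (S (S (S n))) = (1-h) * Y (S (S n)) + h * Y n + h * X n.
Hypothesis rZ : forall n, Z (S (S (S n))) = (1-h) * Z (S (S n)) + h * Z n + h * (2 * Y n + X n).

Let K := 1 + 2*h.
Lemma K_pos : 0 < K. Proof. unfold K; lra. Qed.
Lemma K_nz : K <> 0. Proof. unfold K; lra. Qed.

Definition IX n := X (S (S n)) + h * X (S n) + h * X n.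
Lemma IX_const n : IX n = IX 0.
Proof. induction n; auto. rewrite <- IHn. unfold IX. rewrite rX. ring. Qed.
Definition xi := IX 0 / K.
Definition DX n := X (S n) - X n.
Lemma DX_rec n : DX (S (S n)) + h * DX (S n) + h * DX n = 0.
Proof. unfold DX. rewrite rX. ring. Qed.
Lemma X_dev n : X n - xi = - (DX (S n) + (1+h) * DX n) / K.
Proof.
  pose proof K_nz. unfold xi. rewrite <- (IX_const n). unfold IX, DX, K in *. field. auto.
Qed.
Lemma cv_DX : Un_cv DX 0.
Proof. apply (R2_0 h DX (fun _ => 0)); auto. apply DX_rec. apply cv_const. Qed.
Lemma cv_DX1 : Un_cv (fun n => DX (S n)) 0.
Proof. apply (cv_shift DX). apply cv_DX. Qed.
Lemma cv_nDX : Un_cv (fun n => INR n * DX n) 0.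
Proof.
  pose proof cv_DX. pose proof cv_DX1. pose proof (cv_shift _ _ cv_DX1) as H2. simpl in H2.
  apply (R2_0 h _ (fun n => 2 * DX (S (S n)) + h * DX (S n))); auto.
  - intros n. rewrite !S_INR. pose proof (DX_rec n). 
    replace (2 * DX (S (S n)) + h * DX (S n)) with (2 * DX (S (S n)) + h * DX (S n) + INR n * (DX (S (S n)) + h * DX (S n) + h * DX n)) by (rewrite H1; ring).
    ring.
  - eapply cv_lim. cvauto. ring.
Qed.
Lemma cv_X : Un_cv X xi.
Proof.
  pose proof cv_DX. pose proof cv_DX1. pose proof K_nz.
  apply cv_ext with (fun n => (X n - xi) + xi). intros; ring.
  eapply cv_lim. eapply CV_plus. eapply cv_ext. intros n. symmetry. apply X_dev.
  cvauto. apply cv_const. field. auto.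
Qed.
Lemma cv_X1 : Un_cv (fun n => X (S n)) xi.
Proof. apply (cv_shift X). apply cv_X. Qed.
Lemma cv_nX : Un_cv (fun n => INR n * (X n - xi)) 0.
Proof.
  pose proof cv_DX. pose proof cv_DX1. pose proof cv_nDX. pose proof K_nz.
  pose proof (cv_shift _ _ cv_nDX) as H3. cbv beta in H3.
  assert (H4 : Un_cv (fun n => (INR n + 1) * DX (S n)) 0) by (eapply cv_ext; [|exact H3]; intros; cbv beta; rewrite S_INR; ring).
  apply cv_ext with (fun n => - ((INR n + 1) * DX (S n) - DX (S n) + (1+h) * (INR n * DX n)) / K).
  { intros n. rewrite X_dev. field. auto. }
eapply cv_lim. cvauto. field. auto.
Qed.

Definition y1 := h * xi / K.
Definition DY n := Y (S n) - Y n.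
Lemma DY_rec n : DY (S (S n)) + h * DY (S n) + h * DY n = h * X n.
Proof. unfold DY. rewrite rY. ring. Qed.
Lemma cv_DY : Un_cv DY y1.
Proof.
  pose proof cv_X. unfold y1. apply (R2 h DY (fun n => h * X n)); auto. apply DY_rec.
  eapply cv_lim. cvauto. ring.
Qed.
Lemma cv_DY1 : Un_cv (fun n => DY (S n)) y1.
Proof. apply (cv_shift DY). apply cv_DY. Qed.

Definition IY n := Y (S (S n)) + h * Y (S n) + h * Y n.
Definition G n := INR n * xi - (X (S n) + (1+h) * X n) / K.
Lemma G_S n : G (S n) - G n = X n.
Proof.
  pose proof K_nz. pose proof (IX_const n). unfold G. rewrite S_INR.
  replace (IX 0) with (K * xi) in H0 by (unfold xi; field; auto).
  unfold IX in H0. replace (X (S (S n))) with (K * xi - h * X (S n) - h * X n) by lra.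
  unfold K in *. field. auto.
Qed.
Lemma IY_S n : IY (S n) - IY n = h * X n.
Proof. unfold IY. rewrite rY. ring. Qed.
Definition cY := IY 0 - h * G 0.
Lemma IY_eq n : IY n = cY + h * G n.
Proof.
  induction n. unfold cY; ring.
  pose proof (IY_S n). pose proof (G_S n). nra.
Qed.
Lemma Y_form n : K * Y n = IY n - DY (S n) - (1+h) * DY n.
Proof. unfold K, IY, DY. ring. Qed.
Definition y0 := (cY - h * (2+h) * xi / K - (2+h) * y1) / K.
Lemma Y_dev n : Y n - y1 * INR n = (cY - h * (X (S n) + (1+h) * X n) / K - DY (S n) - (1+h) * DY n) / K.
Proof.
  pose proof K_nz. pose proof (Y_form n). rewrite IY_eq in H0. unfold G in H0.
  replace (Y n) with ((cY + h * (INR n * xi - (X (S n) + (1 + h) * X n) / K) - DY (S n) - (1 + h) * DY n) / K)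
    by (rewrite <- H0; field; auto).
  unfold y1. field. auto.
Qed.
Lemma cv_Y : Un_cv (fun n => Y n - y1 * INR n) y0.
Proof.
  pose proof cv_X. pose proof cv_X1. pose proof cv_DY. pose proof cv_DY1. pose proof K_nz.
  eapply cv_ext. intros n; symmetry; apply Y_dev.
  eapply cv_lim. cvauto. unfold y0. field. auto.
Qed.
Lemma cv_Yn : Un_cv (fun n => Y n / INR n) y1.
Proof. apply divn_lin with y0. apply cv_Y. Qed.
Lemma cv_Y1n : Un_cv (fun n => Y (S n) / INR n) y1.
Proof. apply (divn_shift Y). apply cv_Yn. Qed.
Lemma cv_Gn : Un_cv (fun n => G n / INR n) xi.
Proof.
  apply divn_lin with (- (xi + (1+h)*xi)/K). pose proof cv_X. pose proof cv_X1.
  pose proof K_nz.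
  apply cv_ext with (fun n => - (X (S n) + (1 + h) * X n) / K). { intros n; unfold G; field. auto. }
  eapply cv_lim. cvauto. field. auto.
Qed.
Lemma cv_G1n : Un_cv (fun n => G (S n) / INR n) xi.
Proof. apply (divn_shift G). apply cv_Gn. Qed.

Definition d1 := 2 * h * y1 / K.
Definition DZ n := Z (S n) - Z n.
Lemma DZ_rec n : DZ (S (S n)) + h * DZ (S n) + h * DZ n = h * (2 * Y n + X n).
Proof. unfold DZ. rewrite rZ. ring. Qed.
Lemma cv_DZn : Un_cv (fun n => DZ n / INR n) d1.
Proof.
  apply divn_lin with ((2*h*y0 + h*xi - d1*(2+h))/K).
  pose proof cv_Y. pose proof cv_X. pose proof K_nz.
  apply (R2 h _ (fun n => 2*h*(Y n - y1 * INR n) + h * X n - d1 * (2+h))); auto.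
  - intros n. rewrite !S_INR. pose proof (DZ_rec n).
    replace (DZ (S (S n))) with (h * (2 * Y n + X n) - h * DZ (S n) - h * DZ n) by lra.
    unfold d1, y1. unfold K in *. field. auto.
  - eapply cv_lim. cvauto. ring.
Qed.
Lemma cv_DZ1n : Un_cv (fun n => DZ (S n) / INR n) d1.
Proof. apply (divn_shift DZ). apply cv_DZn. Qed.

Definition G2 n := xi * INR n * (INR n - 1) / 2 - (G (S n) + (1+h) * G n) / K.
Lemma G2_S n : G2 (S n) - G2 n = G n.
Proof.
  pose proof K_nz. unfold G2.
  replace (G (S (S n))) with (G (S n) + X (S n)) by (pose proof (G_S (S n)); lra).
  replace (G (S n)) with (G n + X n) by (pose proof (G_S n); lra).
  unfold G. rewrite !S_INR. field. auto.
Qed.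
Definition Hsum n := (cY * INR n + h * G2 n - Y (S n) - (1+h) * Y n) / K.
Lemma H_S n : Hsum (S n) - Hsum n = Y n.
Proof.
  pose proof K_nz. pose proof (G2_S n). pose proof (Y_form n) as HY. rewrite IY_eq in HY.
  unfold Hsum, DY in *. rewrite S_INR.
  apply (Rmult_eq_reg_l K); auto. field_simplify; auto. field_simplify in HY; auto. nra.
Qed.
Definition IZ n := Z (S (S n)) + h * Z (S n) + h * Z n.
Lemma IZ_S n : IZ (S n) - IZ n = h * (2 * Y n + X n).
Proof. unfold IZ. rewrite rZ. ring. Qed.
Definition cZ := IZ 0 - h * (2 * Hsum 0 + G 0).
Lemma IZ_eq n : IZ n = cZ + h * (2 * Hsum n + G n).
Proof.
  induction n. unfold cZ; ring.
  pose proof (IZ_S n). pose proof (G_S n). pose proof (H_S n). nra.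
Qed.
Lemma Z_form n : Z n = (IZ n - DZ (S n) - (1+h) * DZ n) / K.
Proof. pose proof K_nz. unfold IZ, DZ, K in *. field. auto. Qed.
Definition z2 := h * y1 / K.
Definition z1 := (h * (2 * y0 - y1 + xi) - (2+h) * d1) / K.
Lemma Z_dev n : (n >= 1)%nat ->
  (Z n - z2 * INR n ^ 2) / INR n =
  (cZ * / INR n + h * (2*cY/K - y1 - 2*h*(G (S n) / INR n + (1+h)*(G n / INR n))/K^2
     - 2*(Y (S n) / INR n + (1+h)*(Y n / INR n))/K) + h * (G n / INR n)
     - DZ (S n) / INR n - (1+h) * (DZ n / INR n)) / K.
Proof.
  intros Hn. assert (INR n <> 0) by (apply not_0_INR; lia). pose proof K_nz.
  rewrite Z_form, IZ_eq. unfold Hsum, G2, z2, y1. field. auto.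
Qed.
Lemma cv_Z : Un_cv (fun n => (Z n - z2 * INR n ^ 2) / INR n) z1.
Proof.
  pose proof cv_invn. pose proof cv_Gn. pose proof cv_G1n. pose proof cv_Yn. pose proof cv_Y1n.
  pose proof cv_DZn. pose proof cv_DZ1n. pose proof K_nz.
  eapply (cv_ext_ev _ _ _ 1%nat). intros n Hn. symmetry. apply Z_dev; auto.
  eapply cv_lim. cvauto. unfold z1, y0, y1. field. auto.
Qed.

Hypothesis Xpos : forall n, 0 < X n.
Lemma xi_pos : 0 < xi.
Proof. unfold xi, IX. pose proof K_pos. pose proof (Xpos 0). pose proof (Xpos 1). pose proof (Xpos 2).
  apply Rdiv_lt_0_compat; auto. nra. Qed.

Let lam := 1 - h.
Definition alpha m := X (S m) / lam + X m.
Definition beta m := Y (S m) / lam + Y m + X m.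
Definition gamma m := Z (S m) / lam + Z m + 2 * Y m + X m.
Definition AA := xi * (1/lam + 1).
Definition B1 := y1 * (1/lam + 1).
Definition B0 := (y0 + y1) / lam + y0 + xi.
Definition C2 := z2 * (1/lam + 1).
Definition C1 := (z1 + 2 * z2) / lam + z1 + 2 * y1.

Lemma lam_pos : 0 < lam. Proof. unfold lam; lra. Qed.
Lemma alpha_pos m : 0 < alpha m.
Proof. unfold alpha. pose proof lam_pos. pose proof (Xpos m). pose proof (Xpos (S m)).
  assert (0 < X (S m) / lam) by (apply Rdiv_lt_0_compat; auto). lra. Qed.
Lemma AA_nz : AA <> 0.
Proof. unfold AA. pose proof xi_pos. pose proof lam_pos. assert (0 < 1/lam) by (apply Rdiv_lt_0_compat; lra).
  apply Rgt_not_eq. apply Rmult_lt_0_compat; lra. Qed.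

Lemma cv_alpha : Un_cv alpha AA.
Proof. pose proof cv_X. pose proof cv_X1. unfold alpha, AA. eapply cv_lim. cvauto. pose proof lam_pos. field. lra. Qed.
Lemma cv_malpha : Un_cv (fun m => INR m * (alpha m - AA)) 0.
Proof.
  pose proof cv_X as HA. pose proof cv_X1 as HB. pose proof cv_nX as HC. pose proof lam_pos as HD.
  pose proof (cv_shift _ _ cv_nX) as H3. cbv beta in H3.
  assert (H4 : Un_cv (fun n => (INR n + 1) * (X (S n) - xi)) 0) by (eapply cv_ext; [|exact H3]; intros; cbv beta; rewrite S_INR; ring).
  apply cv_ext with (fun m => ((INR m + 1) * (X (S m) - xi) - (X (S m) - xi)) / lam + INR m * (X m - xi)).
  { intros m. unfold alpha, AA. field. lra. }
  eapply cv_lim. cvauto. field. lra.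
Qed.
Lemma cv_beta : Un_cv (fun m => beta m - B1 * INR m) B0.
Proof.
  pose proof cv_X as HA. pose proof cv_Y as HB. pose proof lam_pos as HD.
  pose proof (cv_shift _ _ cv_Y) as H3. cbv beta in H3.
  apply cv_ext with (fun m => (Y (S m) - y1 * INR (S m)) / lam + y1 / lam + (Y m - y1 * INR m) + X m).
  { intros m. unfold beta, B1. rewrite S_INR. field. lra. }
  eapply cv_lim. cvauto. unfold B0. field. lra.
Qed.
Lemma cv_gamma : Un_cv (fun m => (gamma m - C2 * INR m ^ 2) / INR m) C1.
Proof.
  pose proof cv_invn. pose proof cv_Z. pose proof cv_Yn. pose proof lam_pos.
  pose proof (divn_zero X xi cv_X).
  pose proof (divn_shift (fun n => Z n - z2 * INR n ^ 2) z1 cv_Z) as H5. cbv beta in H5.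
  apply (cv_ext_ev (fun m => ((Z (S m) - z2 * INR (S m) ^ 2) / INR m + 2 * z2 + z2 * / INR m) / lam
      + (Z m - z2 * INR m ^ 2) / INR m + 2 * (Y m / INR m) + X m / INR m) _ _ 1%nat).
  { intros m Hm. assert (INR m <> 0) by (apply not_0_INR; lia). unfold gamma, C2. rewrite S_INR. field. lra. }
  eapply cv_lim. cvauto. unfold C1. field. lra.
Qed.

Lemma cv_invn3 : Un_cv (fun m => / INR (m + 3)) 0.
Proof.
  pose proof (cv_shift _ _ (cv_shift _ _ (cv_shift _ _ cv_invn))) as H0. cbv beta in H0.
  eapply cv_ext; [|exact H0]. intros m. cbv beta. f_equal. f_equal. lia.
Qed.

Lemma INR3_nz m : INR (m + 3) <> 0.
Proof. apply not_0_INR. lia. Qed.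

Lemma mean_lim : Un_cv (fun m => beta m / alpha m / INR (m + 3)) (h / K).
Proof.
  pose proof (divn_lin _ _ _ cv_beta) as Hb. pose proof cv_invn3.
  pose proof (cv_inv _ _ cv_alpha AA_nz) as Ha.
  apply (cv_ext_ev (fun m => (beta m / INR m) * (1 - 3 * / INR (m + 3)) * / alpha m) _ _ 1%nat).
  { intros m Hm. assert (INR m <> 0) by (apply not_0_INR; lia). pose proof (INR3_nz m).
    pose proof (alpha_pos m). rewrite plus_INR in *. simpl (INR 3) in *. field. repeat split; lra. }
  eapply cv_lim. cvauto. pose proof xi_pos. pose proof lam_pos. pose proof K_nz.
  unfold B1, AA, y1. field. repeat split; lra.
Qed.

Definition sig2 := h / K - h^2 / K^2 - 2 * (2 + h) * h^2 / K^3.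

Lemma var_lim : Un_cv (fun m => (gamma m / alpha m - (beta m / alpha m)^2) / INR (m + 3)) sig2.
Proof.
  pose proof cv_beta as Hb. pose proof cv_gamma as Hg. pose proof cv_malpha as Hma. pose proof cv_alpha as Hal.
  pose proof cv_invn3. pose proof cv_invn.
  pose proof (cv_inv _ _ cv_alpha AA_nz) as Ha.
  apply (cv_ext_ev (fun m => (C2 * (INR m * (alpha m - AA)) + ((gamma m - C2 * INR m ^ 2) / INR m) * alpha m
       - 2 * B1 * (beta m - B1 * INR m) - (beta m - B1 * INR m)^2 * / INR m) * (1 - 3 * / INR (m + 3)) * (/ alpha m * / alpha m)) _ _ 1%nat).
  { intros m Hm. assert (INR m <> 0) by (apply not_0_INR; lia). pose proof (INR3_nz m).
    pose proof (alpha_pos m). pose proof lam_pos. pose proof K_nz. rewrite plus_INR in *. simpl (INR 3) in *.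
    unfold C2, AA, B1, z2, y1. field. repeat split; lra. }
  eapply cv_lim. cvauto. pose proof xi_pos. pose proof lam_pos. pose proof K_nz.
  unfold sig2, C1, B0, B1, AA, C2, z1, z2, d1, y1, lam. field. repeat split; lra.
Qed.

End Main.

Definition cube x := Rpower x (1/3).
Lemma cube_pos x : 0 < cube x.
Proof. unfold cube, Rpower. apply exp_pos. Qed.
Lemma cube_cube x : 0 < x -> cube x ^ 3 = x.
Proof.
  intros Hx. unfold cube. rewrite <- (Rpower_pow 3) by (unfold Rpower; apply exp_pos).
  rewrite Rpower_mult. simpl (INR 3). replace (1/3 * (1+1+1)) with 1 by field. apply Rpower_1; auto.
Qed.
Lemma cube_uniq a b : 0 < a -> 0 < b -> a ^ 3 = b ^ 3 -> a = b.
Proof.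
  intros Ha Hb E. assert ((a - b) * (a^2 + a*b + b^2) = 0) by (ring_simplify; lra).
  apply Rmult_integral in H. destruct H. lra. nra.
Qed.

Definition rr := sqrt 93.
Lemma rr_sq : rr * rr = 93. Proof. unfold rr. apply sqrt_sqrt. lra. Qed.
Lemma rr_bnd : 9.6 < rr < 9.7.
Proof. pose proof rr_sq. pose proof (sqrt_pos 93). fold rr in H0. split; nra. Qed.

Definition uu := cube ((31 + 3 * rr) / 1922).
Definition vv := cube ((31 - 3 * rr) / 1922).
Definition ss := uu + vv.
Lemma ss_cubic : 31 * ss ^ 3 - 3 * ss - 1 = 0.
Proof.
  pose proof rr_bnd. pose proof rr_sq.
  assert (Hu : uu ^ 3 = (31 + 3 * rr) / 1922) by (apply cube_cube; lra).
  assert (Hv : vv ^ 3 = (31 - 3 * rr) / 1922) by (apply cube_cube; lra).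
  assert (Huv : uu * vv = 1/31).
  { apply cube_uniq. apply Rmult_lt_0_compat; apply cube_pos. lra.
    rewrite Rpow_mult_distr, Hu, Hv. replace ((31 + 3 * rr) / 1922 * ((31 - 3 * rr) / 1922)) with ((961 - 9 * (rr*rr))/(1922*1922)) by field. rewrite H0. field. }
  unfold ss. replace ((uu+vv)^3) with (uu^3 + vv^3 + 3 * (uu*vv) * (uu+vv)) by ring.
  rewrite Hu, Hv, Huv. field.
Qed.
Lemma ss_bnd : 0 < ss < 1.
Proof.
  pose proof ss_cubic. assert (0 < ss) by (unfold ss; pose proof (cube_pos ((31 + 3 * rr) / 1922)); pose proof (cube_pos ((31 - 3 * rr) / 1922)); unfold uu, vv; lra).
  split; auto. nra.
Qed.

Definition hh := (1 - ss) / (1 + 2 * ss).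
Lemma hh_bnd : 0 < hh < 1.
Proof. pose proof ss_bnd. unfold hh. split. apply Rdiv_lt_0_compat; lra.
  apply (Rmult_lt_reg_r (1 + 2*ss)); [lra|]. unfold Rdiv. rewrite Rmult_assoc, Rinv_l by lra. lra. Qed.
Lemma hh_cube : (1 - hh) ^ 3 = hh.
Proof.
  pose proof ss_bnd. pose proof ss_cubic.
  assert ((1 - hh)^3 - hh = (31 * ss ^ 3 - 3 * ss - 1) / (1 + 2*ss)^3) by (unfold hh; field; lra).
  rewrite H0 in H1. unfold Rdiv in H1. rewrite Rmult_0_l in H1. lra.
Qed.

Lemma mu_eq : hh / (1 + 2 * hh) = 1/3 * (1 - Rpower ((31 + 3 * sqrt 93) / 1922) (1/3)
              - Rpower ((31 - 3 * sqrt 93) / 1922) (1/3)).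
Proof.
  pose proof ss_bnd. fold rr. fold (cube ((31 + 3 * rr) / 1922)). fold (cube ((31 - 3 * rr) / 1922)).
  fold uu vv. replace (1 - uu - vv) with (1 - ss) by (unfold ss; ring). unfold hh. field. lra.
Qed.

Lemma t_uniq t1 t2 : 0 < t1 -> 0 < t2 -> t1^3 - 14787 * t1 - 804357 = 0 -> t2^3 - 14787 * t2 - 804357 = 0 -> t1 = t2.
Proof.
  intros H1 H2 E1 E2. destruct (Req_dec t1 t2) as [|Hn]; auto. exfalso.
  assert ((t1 - t2) * (t1^2 + t1*t2 + t2^2 - 14787) = 0) by (ring_simplify; lra).
  apply Rmult_integral in H. destruct H. lra.
  assert (t1 * (t1^2 - 14787) = 804357) by lra. nra.
Qed.

Lemma sig_eq : sig2 hh = 1/2883 * Rpower (93/2) (1/3)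
       * (Rpower (8649 + 457 * sqrt 93) (1/3) + Rpower (8649 - 457 * sqrt 93) (1/3)).
Proof.
  pose proof ss_bnd. pose proof ss_cubic. pose proof rr_bnd. pose proof rr_sq.
  assert (Hs : sig2 hh = (ss + ss^2 - 2 * ss^3) / 9) by (unfold sig2, hh; field; lra).
  fold rr. fold (cube (93/2)) (cube (8649 + 457 * rr)) (cube (8649 - 457 * rr)).
  set (p := cube (93/2) * cube (8649 + 457 * rr)).
  set (q := cube (93/2) * cube (8649 - 457 * rr)).
  assert (Hp : p ^ 3 = 93/2 * (8649 + 457 * rr)) by (unfold p; rewrite Rpow_mult_distr, !cube_cube; lra).
  assert (Hq : q ^ 3 = 93/2 * (8649 - 457 * rr)) by (unfold q; rewrite Rpow_mult_distr, !cube_cube; lra).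
  assert (p > 0) by (unfold p; apply Rmult_lt_0_compat; apply cube_pos).
  assert (q > 0) by (unfold q; apply Rmult_lt_0_compat; apply cube_pos).
  assert (Hpq : p * q = 4929).
  { apply cube_uniq. apply Rmult_lt_0_compat; auto. lra.
    rewrite Rpow_mult_distr, Hp, Hq.
    replace (93 / 2 * (8649 + 457 * rr) * (93 / 2 * (8649 - 457 * rr))) with (93/2 * (93/2) * (8649*8649 - 457*457*(rr*rr))) by ring.
    rewrite H2. lra. }
  replace (1 / 2883 * cube (93 / 2) * (cube (8649 + 457 * rr) + cube (8649 - 457 * rr))) with ((p+q)/2883) by (unfold p, q; field).
  rewrite Hs.
  assert (E : (2883 * ((ss + ss^2 - 2 * ss^3) / 9)) = p + q).
  { apply t_uniq.
    - assert (0 < ss * (1 - ss) * (1 + 2*ss)) by (apply Rmult_lt_0_compat; [apply Rmult_lt_0_compat|]; lra).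
      replace (ss + ss^2 - 2*ss^3) with (ss * (1 - ss) * (1 + 2*ss)) by ring. lra.
    - lra.
    - set (t := 2883 * ((ss + ss ^ 2 - 2 * ss ^ 3) / 9)).
      assert (t^3 - 14787 * t - 804357 = (31 * ss ^ 3 - 3 * ss - 1) *
        (804357 + 2323698 * ss - 2234325 * ss^2 - 289062073/27 * ss^3 + 5541126 * ss^4 + 114516604/9 * ss^5 - 229033208/27 * ss^6))
        by (unfold t; field).
      rewrite H5, H0. ring.
    - replace ((p+q)^3) with (p^3 + q^3 + 3 * (p*q) * (p+q)) by ring. rewrite Hp, Hq, Hpq. lra. }
  rewrite <- E. field.
Qed.

Definition lamc := 1 - hh.
Definition Xc n := Fk 0 n * lamc ^ n.
Definition Yc n := Fk 1 n * lamc ^ n.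
Definition Zc n := Fk 2 n * lamc ^ n.

Lemma S3 n : S (S (S n)) = (n + 3)%nat. Proof. lia. Qed.
Lemma S2 n : S (S n) = (n + 2)%nat. Proof. lia. Qed.

Lemma lam3 : lamc ^ 3 = hh. Proof. apply hh_cube. Qed.

Lemma rXc n : Xc (S (S (S n))) = (1-hh) * Xc (S (S n)) + hh * Xc n.
Proof. unfold Xc. change (1 - hh) with lamc. rewrite <- lam3. rewrite S3, F0_rec. replace (S (S n)) with (n+2)%nat by lia. rewrite !pow_add. simpl. ring. Qed.
Lemma rYc n : Yc (S (S (S n))) = (1-hh) * Yc (S (S n)) + hh * Yc n + hh * Xc n.
Proof. unfold Xc, Yc. change (1 - hh) with lamc. rewrite <- lam3. rewrite S3, F1_rec. replace (S (S n)) with (n+2)%nat by lia. rewrite !pow_add. simpl. ring. Qed.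
Lemma rZc n : Zc (S (S (S n))) = (1-hh) * Zc (S (S n)) + hh * Zc n + hh * (2 * Yc n + Xc n).
Proof. unfold Xc, Yc, Zc. change (1 - hh) with lamc. rewrite <- lam3. rewrite S3, F2_rec. replace (S (S n)) with (n+2)%nat by lia. rewrite !pow_add. simpl. ring. Qed.

Lemma F0_pos n : 1 <= Fk 0 n.
Proof.
  assert (forall n, 1 <= Fk 0 n /\ 1 <= Fk 0 (S n) /\ 1 <= Fk 0 (S (S n))).
  { induction n0. destruct F_init as (A&B&C&_). lra.
    destruct IHn0 as (A&B&C). repeat split; auto. rewrite S3, F0_rec. rewrite <- S2. lra. }
  apply H.
Qed.
Lemma lamc_pos : 0 < lamc. Proof. unfold lamc. pose proof hh_bnd. lra. Qed.
Lemma Xc_pos n : 0 < Xc n.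
Proof. unfold Xc. apply Rmult_lt_0_compat. pose proof (F0_pos n); lra. apply pow_lt, lamc_pos. Qed.

Lemma ES3 m : ES (m + 3) = beta hh Xc Yc m / alpha hh Xc m.
Proof.
  rewrite ES_eq, a_eq, b_eq. unfold beta, alpha, Xc, Yc. fold lamc.
  pose proof lamc_pos. pose proof (F0_pos m). pose proof (F0_pos (m+1)).
  replace (S m) with (m+1)%nat by lia. rewrite pow_add. simpl.
  assert (0 < lamc ^ m) by (apply pow_lt; auto). field. repeat split; nra.
Qed.

Lemma VS3 m : VS (m + 3) = gamma hh Xc Yc Zc m / alpha hh Xc m - (beta hh Xc Yc m / alpha hh Xc m)^2.
Proof.
  pose proof lamc_pos. pose proof (F0_pos m). pose proof (F0_pos (m+1)).
  rewrite VS_eq. rewrite ES3, c_eq, a_eq. f_equal. unfold gamma, alpha, Xc, Yc, Zc. fold lamc.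
  replace (S m) with (m+1)%nat by lia. rewrite pow_add. simpl.
  assert (0 < lamc ^ m) by (apply pow_lt; auto). field. repeat split; nra.
  rewrite a_eq. lra.
Qed.

Lemma unshift3 u l : Un_cv (fun m => u (m + 3)%nat) l -> Un_cv u l.
Proof.
  intros C. apply cv_unshift, cv_unshift, cv_unshift. eapply cv_ext; [|exact C].
  intros n. cbv beta. f_equal. lia.
Qed.

Theorem mainTheorem2 :
  Un_cv (fun n => ES n / INR n)
    (1/3 * (1 - Rpower ((31 + 3 * sqrt 93) / 1922) (1/3)
              - Rpower ((31 - 3 * sqrt 93) / 1922) (1/3)))
  /\
  Un_cv (fun n => VS n / INR n)
    (1/2883 * Rpower (93/2) (1/3)
       * (Rpower (8649 + 457 * sqrt 93) (1/3)
          + Rpower (8649 - 457 * sqrt 93) (1/3))).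
Proof.
  pose proof hh_bnd as Hh.
  split.
  - rewrite <- mu_eq. apply unshift3.
    eapply cv_ext; [|apply (mean_lim hh Hh Xc Yc rXc rYc Xc_pos)].
    intros m. cbv beta. rewrite ES3. auto.
  - rewrite <- sig_eq. apply unshift3.
    eapply cv_ext; [|apply (var_lim hh Hh Xc Yc Zc rXc rYc rZc Xc_pos)].
    intros m. cbv beta. rewrite VS3. auto.
Qed.
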